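(* Let $\mathcal{D}_1,\mathcal{D}_2$ be fermionically dagger compact categories (each a symmetric monoidal dagger category with duals and with a unitary monoidal $B\mathbb{Z}/2$-action $(-1)^F$), and let $F\colon \mathcal{D}_1\to\mathcal{D}_2$ be a symmetric monoidal dagger functor. Suppose that every iso-positive involution in $\mathcal{D}_2$ is the identity. Then $F$ is $B\mathbb{Z}/2$-equivariant, i.e. $F\big((-1)^F_x\big)=(-1)^F_{F(x)}$ for every object $x$ of $\mathcal{D}_1$.
   Context: A dagger category is a category $\mathcal{D}$ with a functor $\dagger\colon\mathcal{D}\to\mathcal{D}^{\mathrm{op}}$ which is the identity on objects and satisfies $f^{\dagger\dagger}=f$. An isomorphism $f$ is unitary if $f^\dagger=f^{-1}$. An endomorphism $f\colon c\to c$ is iso-positive if $f=g^\dagger g$ for some isomorphism $g\colon c\to c'$; an involution is an endomorphism $j$ with $j\circ j=\mathrm{id}$. A dagger functor satisfies $F(f^\dagger)=F(f)^\dagger$. A symmetric monoidal dagger category is a dagger category with a symmetric monoidal structure such that $(f\otimes g)^\dagger=f^\dagger\otimes g^\dagger$ and the associator, unitors and braiding $\sigma$ are unitary; a symmetric monoidal dagger functor is a symmetric monoidal functor which is a dagger functor and whose structure isomorphisms $F(x)\otimes F(y)\to F(x\otimes y)$, $1\to F(1)$ are unitary. A unitary monoidal $B\mathbb{Z}/2$-action on $\mathcal{D}$ is a natural automorphism $(-1)^F$ of the identity functor with $(-1)^F_x\circ(-1)^F_x=\mathrm{id}_x$, $(-1)^F_{x\otimes y}=(-1)^F_x\otimes(-1)^F_y$,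 $(-1)^F_1=\mathrm{id}$, and each $(-1)^F_x$ unitary. Duals: choose for each object $x$ a dual $x^*$ with $\mathrm{ev}_x\colon x^*\otimes x\to 1$, $\mathrm{coev}_x\colon 1\to x\otimes x^*$ satisfying the triangle identities; the dual of $f\colon x\to y$ is the unique $f^*\colon y^*\to x^*$ with $\mathrm{ev}_x\circ(f^*\otimes\mathrm{id}_x)=\mathrm{ev}_y\circ(\mathrm{id}_{y^*}\otimes f)$. Define the automorphism $\lambda_x$ of $x^*$ (suppressing associators and unitors) by $\lambda_x=(\mathrm{coev}_x^\dagger\otimes\mathrm{id}_{x^*})\circ(\sigma_{x^*,x}\otimes\mathrm{id}_{x^*})\circ(\mathrm{id}_{x^*}\otimes\mathrm{coev}_x)$. A symmetric monoidal dagger category with duals and unitary monoidal $B\mathbb{Z}/2$-action is fermionically dagger compact if for every object $x$ and every iso-positive automorphism $h$ of $x$, the automorphism $\lambda_x\circ(h^* )^{-1}\circ(-1)^F_{x^*}$ of $x^*$ is iso-positive (with respect to the chosen duals). *)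

(* Defs.v *)
Set Implicit Arguments.
Unset Strict Implicit.

Record SMDagCat : Type := {
  Ob : Type;
  Hom : Ob -> Ob -> Type;
  idm : forall a, Hom a a;
  comp : forall {a b c : Ob}, Hom b c -> Hom a b -> Hom a c;
  comp_idl : forall a b (f : Hom a b), comp (idm b) f = f;
  comp_idr : forall a b (f : Hom a b), comp f (idm a) = f;
  comp_assoc : forall a b c d (f : Hom a b) (g : Hom b c) (h : Hom c d),
      comp h (comp g f) = comp (comp h g) f;
  dag : forall {a b : Ob}, Hom a b -> Hom b a;
  dag_comp : forall a b c (f : Hom a b) (g : Hom b c),
      dag (comp g f) = comp (dag f) (dag g);
  dag_id : forall a, dag (idm a) = idm a;
  dag_invol : forall a b (f : Hom a b), dag (dag f) = f;
  tens : Ob -> Ob -> Ob;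
  tensm : forall {a b c d : Ob}, Hom a b -> Hom c d -> Hom (tens a c) (tens b d);
  unit : Ob;
  assoc : forall a b c, Hom (tens (tens a b) c) (tens a (tens b c));
  lunit : forall a, Hom (tens unit a) a;
  runit : forall a, Hom (tens a unit) a;
  braid : forall a b, Hom (tens a b) (tens b a);
  tens_id : forall a b, tensm (idm a) (idm b) = idm (tens a b);
  tens_comp : forall a b c a' b' c' (f : Hom a b) (g : Hom b c)
      (f' : Hom a' b') (g' : Hom b' c'),
      tensm (comp g f) (comp g' f') = comp (tensm g g') (tensm f f');
  assoc_nat : forall a b c d e f (x : Hom a b) (y : Hom c d) (z : Hom e f),
      comp (assoc b d f) (tensm (tensm x y) z)
      = comp (tensm x (tensm y z)) (assoc a c e);
  lunit_nat : forall a b (f : Hom a b),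
      comp (lunit b) (tensm (idm unit) f) = comp f (lunit a);
  runit_nat : forall a b (f : Hom a b),
      comp (runit b) (tensm f (idm unit)) = comp f (runit a);
  braid_nat : forall a b c d (f : Hom a b) (g : Hom c d),
      comp (braid b d) (tensm f g) = comp (tensm g f) (braid a c);
  pentagon : forall a b c d,
      comp (assoc a b (tens c d)) (assoc (tens a b) c d)
      = comp (tensm (idm a) (assoc b c d))
          (comp (assoc a (tens b c) d) (tensm (assoc a b c) (idm d)));
  triangle : forall a b,
      comp (tensm (idm a) (lunit b)) (assoc a unit b)
      = tensm (runit a) (idm b);
  hexagon : forall a b c,
      comp (assoc b c a) (comp (braid a (tens b c)) (assoc a b c))
      = comp (tensm (idm b) (braid a c))
          (comp (assoc b a c) (tensm (braid a b) (idm c)));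
  braid_sym : forall a b, comp (braid b a) (braid a b) = idm (tens a b);
  dag_tens : forall a b c d (f : Hom a b) (g : Hom c d),
      dag (tensm f g) = tensm (dag f) (dag g);
  assoc_unitary : forall a b c,
      comp (dag (assoc a b c)) (assoc a b c) = idm _ /\
      comp (assoc a b c) (dag (assoc a b c)) = idm _;
  lunit_unitary : forall a,
      comp (dag (lunit a)) (lunit a) = idm _ /\ comp (lunit a) (dag (lunit a)) = idm _;
  runit_unitary : forall a,
      comp (dag (runit a)) (runit a) = idm _ /\ comp (runit a) (dag (runit a)) = idm _;
  braid_unitary : forall a b,
      comp (dag (braid a b)) (braid a b) = idm _ /\
      comp (braid a b) (dag (braid a b)) = idm _
}.

Arguments Hom : clear implicits.
Arguments idm {C} a : rename.
Arguments comp {C a b c} g f : rename.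
Arguments dag {C a b} f : rename.
Arguments tens {C} a b : rename.
Arguments tensm {C a b c d} f g : rename.
Arguments unit {C} : rename.
Arguments assoc {C} a b c : rename.
Arguments lunit {C} a : rename.
Arguments runit {C} a : rename.
Arguments braid {C} a b : rename.

Definition is_iso (C : SMDagCat) (a b : Ob C) (f : Hom C a b) : Prop :=
  exists g : Hom C b a, comp g f = idm a /\ comp f g = idm b.

Definition iso_positive (C : SMDagCat) (c : Ob C) (f : Hom C c c) : Prop :=
  exists (c' : Ob C) (g : Hom C c c'), is_iso g /\ f = comp (dag g) g.

Record FermCat : Type := {
  base :> SMDagCat;
  dualo : Ob base -> Ob base;
  ev : forall x, Hom base (tens (dualo x) x) unit;
  coev : forall x, Hom base unit (tens x (dualo x));
  zigzag_l : forall x,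
      comp (runit x)
        (comp (tensm (idm x) (ev x))
           (comp (assoc x (dualo x) x)
              (comp (tensm (coev x) (idm x)) (dag (lunit x))))) = idm x;
  zigzag_r : forall x,
      comp (lunit (dualo x))
        (comp (tensm (ev x) (idm (dualo x)))
           (comp (dag (assoc (dualo x) x (dualo x)))
              (comp (tensm (idm (dualo x)) (coev x)) (dag (runit (dualo x))))))
      = idm (dualo x);
  par : forall x, Hom base x x;
  par_nat : forall a b (f : Hom base a b), comp (par b) f = comp f (par a);
  par_invol : forall x, comp (par x) (par x) = idm x;
  par_tens : forall x y, par (tens x y) = tensm (par x) (par y);
  par_unit : par unit = idm unit;
  par_unitary : forall x,
      comp (dag (par x)) (par x) = idm x /\ comp (par x) (dag (par x)) = idm x
}.

Arguments dualo {f} x : rename.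
Arguments ev {f} x : rename.
Arguments coev {f} x : rename.
Arguments par {f} x : rename.

(* g : y^* -> x^* is the dual of f : x -> y (with respect to the chosen duals):
   ev_x o (g (x) id_x) = ev_y o (id_{y^*} (x) f).  It is unique when it exists. *)
Definition is_dual_mor (C : FermCat) (x y : Ob C) (f : Hom C x y)
    (g : Hom C (dualo y) (dualo x)) : Prop :=
  comp (ev x) (tensm g (idm x)) = comp (ev y) (tensm (idm (dualo y)) f).

Definition lam (C : FermCat) (x : Ob C) : Hom C (dualo x) (dualo x) :=
  comp (lunit (dualo x))
   (comp (tensm (dag (coev x)) (idm (dualo x)))
    (comp (tensm (braid (dualo x) x) (idm (dualo x)))
     (comp (dag (assoc (dualo x) x (dualo x)))
      (comp (tensm (idm (dualo x)) (coev x))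
            (dag (runit (dualo x))))))).

(* For every x and iso-positive h : x -> x, the automorphism
   lambda_x o inv(h^dual) o (-1)^F_{x^*} is iso-positive.  Here h^* is the
   (unique) dual morphism and inv(h^dual) its (unique) inverse. *)
Definition fermionically_dagger_compact (C : FermCat) : Prop :=
  forall (x : Ob C) (h : Hom C x x), iso_positive h ->
  forall (hs : Hom C (dualo x) (dualo x)), is_dual_mor h hs ->
  forall (hsi : Hom C (dualo x) (dualo x)),
    comp hsi hs = idm _ -> comp hs hsi = idm _ ->
    iso_positive (comp (lam x) (comp hsi (par (dualo x)))).

Record SMDagFunctor (C D : SMDagCat) : Type := {
  Fo : Ob C -> Ob D;
  Fm : forall {a b : Ob C}, Hom C a b -> Hom D (Fo a) (Fo b);
  Fm_id : forall a, Fm (idm a) = idm (Fo a);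
  Fm_comp : forall a b c (f : Hom C a b) (g : Hom C b c),
      Fm (comp g f) = comp (Fm g) (Fm f);
  Fm_dag : forall a b (f : Hom C a b), Fm (dag f) = dag (Fm f);
  mu : forall x y, Hom D (tens (Fo x) (Fo y)) (Fo (tens x y));
  eps : Hom D unit (Fo unit);
  mu_nat : forall a b c d (f : Hom C a b) (g : Hom C c d),
      comp (Fm (tensm f g)) (mu a c) = comp (mu b d) (tensm (Fm f) (Fm g));
  mu_unitary : forall x y,
      comp (dag (mu x y)) (mu x y) = idm _ /\ comp (mu x y) (dag (mu x y)) = idm _;
  eps_unitary : comp (dag eps) eps = idm _ /\ comp eps (dag eps) = idm _;
  F_assoc : forall x y z,
      comp (Fm (assoc x y z)) (comp (mu (tens x y) z) (tensm (mu x y) (idm (Fo z))))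
      = comp (mu x (tens y z))
          (comp (tensm (idm (Fo x)) (mu y z)) (assoc (Fo x) (Fo y) (Fo z)));
  F_lunit : forall x,
      comp (Fm (lunit x)) (comp (mu unit x) (tensm eps (idm (Fo x)))) = lunit (Fo x);
  F_runit : forall x,
      comp (Fm (runit x)) (comp (mu x unit) (tensm (idm (Fo x)) eps)) = runit (Fo x);
  F_braid : forall x y,
      comp (Fm (braid x y)) (mu x y) = comp (mu y x) (braid (Fo x) (Fo y))
}.

Arguments Fo {C D} F x : rename.
Arguments Fm {C D} F {a b} f : rename.

(* Main.v *)
Require Import Defs.

Local Notation "g ∘ f" := (comp g f) (at level 40, left associativity).
Local Notation "f ⊗ g" := (tensm f g) (at level 35).
Local Notation "f †" := (dag f) (at level 9).

Ltac assocr := repeat rewrite <- comp_assoc.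

Lemma rw2 {C : SMDagCat} {a b c : Ob C} {f : Hom C a b} {g : Hom C b c} {h : Hom C a c} :
  g ∘ f = h -> forall d (r : Hom C d a), g ∘ (f ∘ r) = h ∘ r.
Proof. intros H d r. rewrite comp_assoc, H. reflexivity. Qed.

Lemma rw3 {C : SMDagCat} {a b c e : Ob C} {f : Hom C a b} {g : Hom C b c} {k : Hom C c e} {h : Hom C a e} :
  k ∘ (g ∘ f) = h -> forall d (r : Hom C d a), k ∘ (g ∘ (f ∘ r)) = h ∘ r.
Proof. intros H d r. rewrite comp_assoc, comp_assoc, <- (comp_assoc f g k), H. reflexivity. Qed.
Lemma rw4 {C : SMDagCat} {a b c e i : Ob C} {f : Hom C a b} {g : Hom C b c} {k : Hom C c e} {l : Hom C e i} {h : Hom C a i} :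
  l ∘ (k ∘ (g ∘ f)) = h -> forall d (r : Hom C d a), l ∘ (k ∘ (g ∘ (f ∘ r))) = h ∘ r.
Proof. intros H d r. rewrite <- H. repeat rewrite comp_assoc. reflexivity. Qed.

Ltac crw H := let H' := fresh in pose proof H as H'; repeat rewrite <- comp_assoc in H';
  first [ rewrite (rw4 H') | rewrite (rw3 H') | rewrite (rw2 H') | rewrite H' ]; clear H'; assocr.
Ltac crwl H := crw (eq_sym H).

Lemma tens_l (C : SMDagCat) a b c d (f : Hom C a b) (g : Hom C c d) :
  f ⊗ g = (f ⊗ idm d) ∘ (idm a ⊗ g).
Proof. rewrite <- tens_comp, comp_idl, comp_idr. reflexivity. Qed.
Lemma tens_r (C : SMDagCat) a b c d (f : Hom C a b) (g : Hom C c d) :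
  f ⊗ g = (idm b ⊗ g) ∘ (f ⊗ idm c).
Proof. rewrite <- tens_comp, comp_idl, comp_idr. reflexivity. Qed.

Lemma assoc_dl (C : SMDagCat) (a b c : Ob C) : (assoc a b c)† ∘ assoc a b c = idm _.
Proof. apply assoc_unitary. Qed.
Lemma assoc_dr (C : SMDagCat) (a b c : Ob C) : assoc a b c ∘ (assoc a b c)† = idm _.
Proof. apply assoc_unitary. Qed.
Lemma lunit_dl (C : SMDagCat) (a : Ob C) : (lunit a)† ∘ lunit a = idm (tens (@unit C) a).
Proof. apply lunit_unitary. Qed.
Lemma lunit_dr (C : SMDagCat) (a : Ob C) : lunit a ∘ (lunit a)† = idm a.
Proof. apply lunit_unitary. Qed.
Lemma runit_dl (C : SMDagCat) (a : Ob C) : (runit a)† ∘ runit a = idm (tens a (@unit C)).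
Proof. apply runit_unitary. Qed.
Lemma runit_dr (C : SMDagCat) (a : Ob C) : runit a ∘ (runit a)† = idm a.
Proof. apply runit_unitary. Qed.

Lemma assoc_nat_d {C : SMDagCat} {a b c d e f} (x : Hom C a b) (y : Hom C c d) (z : Hom C e f) :
  (assoc b d f)† ∘ (x ⊗ (y ⊗ z)) = ((x ⊗ y) ⊗ z) ∘ (assoc a c e)†.
Proof.
  transitivity ((assoc b d f)† ∘ ((x ⊗ (y ⊗ z)) ∘ (assoc a c e ∘ (assoc a c e)†))).
  { rewrite assoc_dr, comp_idr. reflexivity. }
  crwl (assoc_nat x y z). crw (assoc_dl C b d f). rewrite comp_idl. reflexivity.
Qed.
Lemma lunit_nat_d {C : SMDagCat} {a b} (f : Hom C a b) :
  (lunit b)† ∘ f = (idm unit ⊗ f) ∘ (lunit a)†.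
Proof.
  transitivity ((lunit b)† ∘ (f ∘ (lunit a ∘ (lunit a)†))).
  { rewrite lunit_dr, comp_idr. reflexivity. }
  crwl (lunit_nat f). crw (lunit_dl C b). rewrite comp_idl. reflexivity.
Qed.
Lemma runit_nat_d {C : SMDagCat} {a b} (f : Hom C a b) :
  (runit b)† ∘ f = (f ⊗ idm unit) ∘ (runit a)†.
Proof.
  transitivity ((runit b)† ∘ (f ∘ (runit a ∘ (runit a)†))).
  { rewrite runit_dr, comp_idr. reflexivity. }
  crwl (runit_nat f). crw (runit_dl C b). rewrite comp_idl. reflexivity.
Qed.

Lemma tcomp {C : SMDagCat} {a b c a' b' c' : Ob C} {f : Hom C a b} {g : Hom C b c} {f' : Hom C a' b'} {g' : Hom C b' c'} :
  (g ⊗ g') ∘ (f ⊗ f') = (g ∘ f) ⊗ (g' ∘ f').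
Proof. rewrite tens_comp. reflexivity. Qed.
Lemma tcomp_r {C : SMDagCat} {a b c a' b' c' : Ob C} {f : Hom C a b} {g : Hom C b c} {f' : Hom C a' b'} {g' : Hom C b' c'} d (r : Hom C d _) :
  (g ⊗ g') ∘ ((f ⊗ f') ∘ r) = ((g ∘ f) ⊗ (g' ∘ f')) ∘ r.
Proof. rewrite comp_assoc, tens_comp. reflexivity. Qed.
Ltac tmerge := repeat (first [rewrite tcomp_r | rewrite tcomp]); repeat rewrite comp_idl; repeat rewrite comp_idr.

Lemma idl_t (C : SMDagCat) (u : Ob C) a b c (f : Hom C a b) (g : Hom C b c) :
  idm u ⊗ (g ∘ f) = (idm u ⊗ g) ∘ (idm u ⊗ f).
Proof. rewrite <- tens_comp, comp_idl. reflexivity. Qed.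
Lemma idr_t (C : SMDagCat) (u : Ob C) a b c (f : Hom C a b) (g : Hom C b c) :
  (g ∘ f) ⊗ idm u = (g ⊗ idm u) ∘ (f ⊗ idm u).
Proof. rewrite <- tens_comp, comp_idl. reflexivity. Qed.

Lemma interchange {C : SMDagCat} {a b a' b' : Ob C} (f : Hom C a b) (g : Hom C a' b') :
  (f ⊗ idm b') ∘ (idm a ⊗ g) = (idm b ⊗ g) ∘ (f ⊗ idm a').
Proof. rewrite <- !tens_comp, !comp_idl, !comp_idr. reflexivity. Qed.

Lemma cancel_r {C : SMDagCat} {a b c} {f g : Hom C b c} {w : Hom C a b} {wi : Hom C b a} :
  w ∘ wi = idm b -> f ∘ w = g ∘ w -> f = g.
Proof.
  intros H1 H2. rewrite <- (comp_idr f), <- (comp_idr g), <- H1, !comp_assoc, H2. reflexivity.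
Qed.
Lemma cancel_l {C : SMDagCat} {a b c} {f g : Hom C a b} {w : Hom C b c} {wi : Hom C c b} :
  wi ∘ w = idm b -> w ∘ f = w ∘ g -> f = g.
Proof.
  intros H1 H2. rewrite <- (comp_idl f), <- (comp_idl g), <- H1, <- !comp_assoc, H2. reflexivity.
Qed.

Lemma lunit_cancel (C : SMDagCat) a b (f g : Hom C a b) : idm unit ⊗ f = idm unit ⊗ g -> f = g.
Proof.
  intro H. apply (cancel_r (lunit_dr C a)).
  crwl (lunit_nat f). rewrite H. crw (lunit_nat g). reflexivity.
Qed.
Lemma runit_cancel (C : SMDagCat) a b (f g : Hom C a b) : f ⊗ idm unit = g ⊗ idm unit -> f = g.
Proof.
  intro H. apply (cancel_r (runit_dr C a)).
  crwl (runit_nat f). rewrite H. crw (runit_nat g). reflexivity.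
Qed.

Lemma kelly2 (C : SMDagCat) (a b : Ob C) :
  lunit (tens a b) ∘ assoc unit a b = lunit a ⊗ idm b.
Proof.
  apply lunit_cancel.
  apply (cancel_r (w := assoc unit (tens unit a) b ∘ (assoc unit unit a ⊗ idm b))
                  (wi := ((assoc unit unit a)† ⊗ idm b) ∘ (assoc _ _ _)†)).
  { assocr. tmerge. rewrite assoc_dr, tens_id, comp_idl, assoc_dr. reflexivity. }
  rewrite idl_t. assocr. crwl (pentagon unit unit a b). crw (triangle unit (tens a b)).
  crwl (assoc_nat (idm unit) (lunit a) (idm b)). tmerge. rewrite triangle.
  rewrite <- (tens_id a b). crwl (assoc_nat (runit (@unit C)) (idm a) (idm b)). reflexivity.
Qed.

Lemma kelly1 (C : SMDagCat) (a b : Ob C) :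
  (idm a ⊗ runit b) ∘ assoc a b unit = runit (tens a b).
Proof.
  apply runit_cancel.
  apply (cancel_l (w := assoc a b unit) (wi := (assoc a b unit)†)).
  { apply assoc_dl. }
  rewrite idr_t. crw (assoc_nat (idm a) (runit b) (idm (@unit C))).
  rewrite <- (triangle b unit). rewrite idl_t. assocr.
  crwl (pentagon a b (@unit C) unit).
  crwl (assoc_nat (idm a) (idm b) (lunit (@unit C))). rewrite tens_id.
  crw (triangle (tens a b) unit). reflexivity.
Qed.

Lemma lunit_unit_eq (C : SMDagCat) : lunit (tens (@unit C) unit) = idm unit ⊗ lunit unit.
Proof.
  apply (cancel_l (w := lunit (@unit C)) (wi := (lunit unit)†)).
  { apply lunit_dl. }
  rewrite (lunit_nat (lunit (@unit C))). reflexivity.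
Qed.

Lemma kelly3 (C : SMDagCat) : lunit (@unit C) = runit unit.
Proof.
  apply runit_cancel. rewrite <- (triangle unit unit). rewrite <- kelly2.
  rewrite lunit_unit_eq. reflexivity.
Qed.

Lemma kelly2_d (C : SMDagCat) (a b : Ob C) :
  (assoc unit a b)† ∘ (lunit (tens a b))† = (lunit a)† ⊗ idm b.
Proof. rewrite <- dag_comp, kelly2, dag_tens, dag_id. reflexivity. Qed.

Lemma kelly1_d (C : SMDagCat) (a b : Ob C) :
  idm a ⊗ (runit b)† = assoc a b unit ∘ (runit (tens a b))†.
Proof.
  rewrite <- kelly1. rewrite dag_comp, dag_tens, dag_id. assocr.
  crw (assoc_dr C a b unit). rewrite comp_idl. reflexivity.
Qed.

Lemma pent_d (C : SMDagCat) (a b c d : Ob C) :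
  (idm a ⊗ (assoc b c d)†) ∘ assoc a b (tens c d)
  = assoc a (tens b c) d ∘ ((assoc a b c ⊗ idm d) ∘ (assoc (tens a b) c d)†).
Proof.
  apply (cancel_r (w := assoc (tens a b) c d) (wi := (assoc (tens a b) c d)†)).
  { apply assoc_dr. }
  assocr. rewrite pentagon. rewrite assoc_dl, comp_idr. tmerge.
  rewrite assoc_dl, tens_id, comp_idl. reflexivity.
Qed.

Lemma lemmaA (C : SMDagCat) (y d' d : Ob C) (c' : Hom C unit (tens y d'))
  (e' : Hom C (tens d' y) unit) (c : Hom C unit (tens y d))
  (Z : runit y ∘ ((idm y ⊗ e') ∘ (assoc y d' y ∘ ((c' ⊗ idm y) ∘ (lunit y)†))) = idm y) :
  (idm y ⊗ (lunit d ∘ ((e' ⊗ idm d) ∘ ((assoc d' y d)† ∘ ((idm d' ⊗ c) ∘ (runit d')†))))) ∘ c' = c.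
Proof.
  symmetry.
  transitivity (((runit y ∘ ((idm y ⊗ e') ∘ (assoc y d' y ∘ ((c' ⊗ idm y) ∘ (lunit y)†)))) ⊗ idm d) ∘ c).
  { rewrite Z, tens_id, comp_idl. reflexivity. }
  rewrite !idr_t. assocr. crwl (kelly2_d C y d). crw (lunit_nat_d c).
  crwl (assoc_nat_d c' (idm y) (idm d)). rewrite (tens_id y d).
  crw (interchange c' c).
  rewrite !idl_t. assocr. rewrite kelly1_d. assocr. crw (runit_nat_d c').
  crwl (assoc_nat (idm y) (idm d') c). rewrite tens_id.
  rewrite <- kelly3.
  crw (pent_d C y d' y d).
  crwl (assoc_nat (idm y) e' (idm d)). crw (triangle y d).
  reflexivity.
Qed.

Lemma lemmaB (C : SMDagCat) (y d' : Ob C) (c' : Hom C unit (tens y d'))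
  (e' : Hom C (tens d' y) unit)
  (Z : lunit d' ∘ ((e' ⊗ idm d') ∘ ((assoc d' y d')† ∘ ((idm d' ⊗ c') ∘ (runit d')†))) = idm d')
  (u : Hom C d' d') (Hu : (idm y ⊗ u) ∘ c' = c') : u = idm d'.
Proof.
  rewrite <- (comp_idr u), <- Z. assocr.
  crwl (lunit_nat u). crwl (interchange e' u). rewrite <- (tens_id d' y).
  crwl (assoc_nat_d (idm d') (idm y) u). crwl (idl_t C d' _ _ _ c' (idm y ⊗ u)). rewrite Hu. reflexivity.
Qed.

Definition lamg (C : SMDagCat) (y d : Ob C) (c : Hom C unit (tens y d)) : Hom C d d :=
  lunit d ∘ ((c† ⊗ idm d) ∘ ((braid d y ⊗ idm d) ∘ ((assoc d y d)† ∘ ((idm d ⊗ c) ∘ (runit d)†)))).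
Arguments lamg {C y d} c.

Lemma lamg_nat (C : SMDagCat) (y d' d : Ob C) (c' : Hom C unit (tens y d')) (psi : Hom C d' d) :
  lamg ((idm y ⊗ psi) ∘ c') = psi ∘ (lamg c' ∘ psi†).
Proof.
  unfold lamg. rewrite dag_comp, dag_tens, dag_id.
  rewrite (idl_t C d). assocr.
  crw (assoc_nat_d (idm d) (idm y) psi). rewrite tens_id.
  crw (interchange (braid d y) psi).
  crw (interchange (c'† ∘ (idm y ⊗ psi†)) psi).
  crw (lunit_nat psi).
  rewrite idr_t. assocr.
  assert (E : ((idm y ⊗ psi†) ⊗ idm d') ∘ (braid d y ⊗ idm d') = (braid d' y ⊗ idm d') ∘ ((psi† ⊗ idm y) ⊗ idm d')).
  { rewrite !tcomp, braid_nat. reflexivity. }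
  crw E.
  crwl (assoc_nat_d psi† (idm y) (idm d')). rewrite tens_id.
  crw (interchange psi† c').
  crwl (runit_nat_d psi†). reflexivity.
Qed.

Lemma mu_dl {C D : SMDagCat} (F : SMDagFunctor C D) x y : (mu F x y)† ∘ mu F x y = idm _.
Proof. apply mu_unitary. Qed.
Lemma mu_dr {C D : SMDagCat} (F : SMDagFunctor C D) x y : mu F x y ∘ (mu F x y)† = idm _.
Proof. apply mu_unitary. Qed.
Lemma eps_dl {C D : SMDagCat} (F : SMDagFunctor C D) : (eps F)† ∘ eps F = idm _.
Proof. apply eps_unitary. Qed.
Lemma eps_dr {C D : SMDagCat} (F : SMDagFunctor C D) : eps F ∘ (eps F)† = idm _.
Proof. apply eps_unitary. Qed.

Lemma solve_r {C : SMDagCat} {a b c} {f : Hom C b c} {g : Hom C a c} {w : Hom C a b} {wi : Hom C b a} :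
  w ∘ wi = idm b -> f ∘ w = g -> f = g ∘ wi.
Proof. intros H1 H2. rewrite <- H2, <- comp_assoc, H1, comp_idr. reflexivity. Qed.

Lemma F_tens {C D : SMDagCat} (F : SMDagFunctor C D) a b c d (f : Hom C a b) (g : Hom C c d) :
  Fm F (f ⊗ g) = mu F b d ∘ ((Fm F f ⊗ Fm F g) ∘ (mu F a c)†).
Proof. rewrite comp_assoc. apply (solve_r (mu_dr F a c)). apply mu_nat. Qed.

Lemma F_runit' {C D : SMDagCat} (F : SMDagFunctor C D) a :
  Fm F (runit a) = runit (Fo F a) ∘ ((idm _ ⊗ (eps F)†) ∘ (mu F a unit)†).
Proof.
  apply (solve_r (w := mu F a unit ∘ (idm _ ⊗ eps F))).
  { assocr. tmerge. rewrite eps_dr, tens_id, comp_idl. apply mu_dr. }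
  apply F_runit.
Qed.
Lemma F_lunit' {C D : SMDagCat} (F : SMDagFunctor C D) a :
  Fm F (lunit a) = lunit (Fo F a) ∘ (((eps F)† ⊗ idm _) ∘ (mu F unit a)†).
Proof.
  apply (solve_r (w := mu F unit a ∘ (eps F ⊗ idm _))).
  { assocr. tmerge. rewrite eps_dr, tens_id, comp_idl. apply mu_dr. }
  apply F_lunit.
Qed.
Lemma F_assoc' {C D : SMDagCat} (F : SMDagFunctor C D) x y z :
  Fm F (assoc x y z) = mu F x (tens y z) ∘ ((idm _ ⊗ mu F y z) ∘ (assoc _ _ _ ∘ (((mu F x y)† ⊗ idm _) ∘ (mu F (tens x y) z)†))).
Proof.
  assert (E : Fm F (assoc x y z) = (mu F x (tens y z) ∘ ((idm _ ⊗ mu F y z) ∘ assoc _ _ _)) ∘ (((mu F x y)† ⊗ idm _) ∘ (mu F (tens x y) z)†)).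
  { apply (solve_r (w := mu F (tens x y) z ∘ (mu F x y ⊗ idm _))).
    { assocr. tmerge. rewrite mu_dr, tens_id, comp_idl. apply mu_dr. }
    rewrite F_assoc. assocr. reflexivity. }
  rewrite E. assocr. reflexivity.
Qed.
Lemma F_braid' {C D : SMDagCat} (F : SMDagFunctor C D) x y :
  Fm F (braid x y) = mu F y x ∘ (braid _ _ ∘ (mu F x y)†).
Proof. rewrite comp_assoc. apply (solve_r (mu_dr F x y)). apply F_braid. Qed.

Definition cF {D1 D2 : FermCat} (F : SMDagFunctor D1 D2) (x : Ob D1) :
  Hom D2 unit (tens (Fo F x) (Fo F (dualo x))) := (mu F x (dualo x))† ∘ (Fm F (coev x) ∘ eps F).
Definition eF {D1 D2 : FermCat} (F : SMDagFunctor D1 D2) (x : Ob D1) :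
  Hom D2 (tens (Fo F (dualo x)) (Fo F x)) unit := (eps F)† ∘ (Fm F (ev x) ∘ mu F (dualo x) x).

Ltac simp_mu F := repeat (first [ rewrite (rw2 (mu_dl F _ _)) | rewrite (mu_dl F _ _)
   | rewrite (rw2 (mu_dr F _ _)) | rewrite (mu_dr F _ _)
   | rewrite (rw2 (eps_dl F)) | rewrite (eps_dl F) | rewrite (rw2 (eps_dr F)) | rewrite (eps_dr F)
   | rewrite comp_idl | rewrite comp_idr ]).

Lemma Z1 {D1 D2 : FermCat} (F : SMDagFunctor D1 D2) (x : Ob D1) :
  runit (Fo F x) ∘ ((idm _ ⊗ eF F x) ∘ (assoc _ _ _ ∘ ((cF F x ⊗ idm _) ∘ (lunit _)†))) = idm _.
Proof.
  unfold cF, eF.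
  transitivity (Fm F (idm x)); [| apply Fm_id].
  rewrite <- (zigzag_l x).
  rewrite !Fm_comp, Fm_dag, F_runit', F_lunit', F_assoc', !F_tens, !Fm_id.
  rewrite !dag_comp, !dag_tens, !dag_invol, !dag_id. assocr.
  simp_mu F.
  rewrite !idl_t, !idr_t. assocr. reflexivity.
Qed.

Lemma F_lam {D1 D2 : FermCat} (F : SMDagFunctor D1 D2) (x : Ob D1) :
  Fm F (lam x) = lamg (cF F x).
Proof.
  unfold lam, lamg, cF.
  rewrite !Fm_comp, !Fm_dag, F_lunit', F_runit', F_assoc', !F_tens, F_braid', !Fm_id, Fm_dag.
  rewrite !dag_comp, !dag_tens, !dag_invol, !dag_id. assocr.
  repeat (tmerge; simp_mu F; rewrite ?tens_id; assocr).
  reflexivity.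
Qed.

Lemma id_iso_pos (C : SMDagCat) (a : Ob C) : iso_positive (idm a).
Proof.
  exists a, (idm a). split.
  - exists (idm a). split; apply comp_idl.
  - rewrite dag_id, comp_idl. reflexivity.
Qed.

Lemma fdc_id (C : FermCat) (HC : fermionically_dagger_compact C) (x : Ob C) :
  exists c' (g : Hom C (dualo x) c') (gi : Hom C c' (dualo x)), gi ∘ g = idm _ /\ g ∘ gi = idm _ /\
     lam x ∘ par (dualo x) = g† ∘ g.
Proof.
  destruct (HC x (idm x) (id_iso_pos C x) (idm _) eq_refl (idm _) (comp_idl _) (comp_idl _))
    as [c' [g [[gi [E1 E2]] E3]]].
  exists c', g, gi. split; [exact E1|]. split; [exact E2|].
  rewrite <- E3, comp_idl. reflexivity.
Qed.

Lemma stepA (D1 D2 : FermCat)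
  (H1 : fermionically_dagger_compact D1) (H2 : fermionically_dagger_compact D2)
  (F : SMDagFunctor D1 D2)
  (Hinv : forall (c : Ob D2) (j : Hom D2 c c),
      iso_positive j -> comp j j = idm c -> j = idm c) (x : Ob D1) :
  Fm F (par (dualo x)) = par (Fo F (dualo x)).
Proof.
  pose (c := cF F x).
  pose (psi := lunit (Fo F (dualo x)) ∘ ((ev (Fo F x) ⊗ idm (Fo F (dualo x))) ∘ ((assoc (dualo (Fo F x)) (Fo F x) (Fo F (dualo x)))† ∘ ((idm (dualo (Fo F x)) ⊗ c) ∘ (runit (dualo (Fo F x)))†)))).
  assert (Hpsi : (idm (Fo F x) ⊗ psi) ∘ coev (Fo F x) = c) by (apply lemmaA; apply zigzag_l).
  pose (phi := lunit (dualo (Fo F x)) ∘ ((eF F x ⊗ idm _) ∘ ((assoc (Fo F (dualo x)) (Fo F x) (dualo (Fo F x)))† ∘ ((idm (Fo F (dualo x)) ⊗ coev (Fo F x)) ∘ (runit (Fo F (dualo x)))†)))).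
  assert (Hphi : (idm (Fo F x) ⊗ phi) ∘ c = coev (Fo F x)) by (apply lemmaA; apply Z1).
  assert (Hpp : phi ∘ psi = idm _).
  { apply (lemmaB _ _ _ _ _ (zigzag_r (Fo F x))). rewrite idl_t. assocr. rewrite Hpsi. exact Hphi. }
  pose (L := Fm F (lam x)).
  assert (HL : psi ∘ (lam (Fo F x) ∘ psi†) = L).
  { unfold L. rewrite F_lam. fold c. rewrite <- Hpsi. symmetry. apply lamg_nat. }
  destruct (fdc_id D1 H1 x) as [c1 [g [gi [Eg1 [Eg2 Eg]]]]].
  pose (K := Fm F g). pose (Ki := Fm F gi). pose (k := Fm F (par (dualo x))).
  assert (HK1 : Ki ∘ K = idm _) by (unfold K, Ki; rewrite <- Fm_comp, Eg1; apply Fm_id).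
  assert (HK2 : K ∘ Ki = idm _) by (unfold K, Ki; rewrite <- Fm_comp, Eg2; apply Fm_id).
  assert (HLk : L ∘ k = K† ∘ K) by (unfold L, k, K; rewrite <- Fm_comp, Eg, Fm_comp, Fm_dag; reflexivity).
  assert (Hkk : k ∘ k = idm _) by (unfold k; rewrite <- Fm_comp, par_invol; apply Fm_id).
  destruct (fdc_id D2 H2 (Fo F x)) as [cG [G [Gi [EG1 [EG2 EG]]]]].
  assert (HL2 : L = K† ∘ (K ∘ k)).
  { rewrite comp_assoc, <- HLk, <- comp_assoc, Hkk, comp_idr. reflexivity. }
  assert (Hright : psi ∘ (lam (Fo F x) ∘ (psi† ∘ (k ∘ (Ki ∘ Ki†)))) = idm _).
  { crw HL. rewrite HL2. assocr. crw Hkk. rewrite comp_idl. crw HK2. rewrite comp_idl.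
    rewrite <- dag_comp, HK1, dag_id. reflexivity. }
  assert (Hpp2 : psi ∘ phi = idm _).
  { transitivity (psi ∘ (phi ∘ (psi ∘ (lam (Fo F x) ∘ (psi† ∘ (k ∘ (Ki ∘ Ki†))))))).
    { rewrite Hright, comp_idr. reflexivity. }
    crw Hpp. rewrite comp_idl. exact Hright. }
  pose (N := G ∘ (psi† ∘ Ki)). pose (Ninv := K ∘ (phi† ∘ Gi)).
  assert (HN1 : Ninv ∘ N = idm _).
  { unfold N, Ninv. assocr. crw EG1. rewrite comp_idl. crwl (dag_comp phi psi).
    rewrite Hpp2, dag_id, comp_idl. exact HK2. }
  assert (HN2 : N ∘ Ninv = idm _).
  { unfold N, Ninv. assocr. crw HK1. rewrite comp_idl. crwl (dag_comp psi phi).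
    rewrite Hpp, dag_id, comp_idl. exact EG2. }
  pose (J := K ∘ (k ∘ (par (Fo F (dualo x)) ∘ Ki))).
  assert (HJpos : J = N† ∘ N).
  { unfold N, J. rewrite !dag_comp, dag_invol. assocr. crwl EG.
    crw (par_nat psi†). crw HL. rewrite HL2. assocr.
    crwl (dag_comp Ki K). rewrite HK2, dag_id, comp_idl. reflexivity. }
  assert (HJJ : J ∘ J = idm _).
  { unfold J. assocr. crw HK1. rewrite comp_idl. crw (par_nat k).
    crw Hkk. rewrite comp_idl. crw (par_invol (Fo F (dualo x))). rewrite comp_idl. exact HK2. }
  assert (HJ : J = idm _).
  { apply Hinv; [| exact HJJ]. exists cG, N. split; [| exact HJpos].
    exists Ninv. split; assumption. }
  assert (Hkp : k ∘ par (Fo F (dualo x)) = idm _).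
  { transitivity (Ki ∘ (J ∘ K)).
    - unfold J. assocr. rewrite HK1, comp_idr. crw HK1. rewrite comp_idl. reflexivity.
    - rewrite HJ, comp_idl. exact HK1. }
  transitivity (k ∘ (par (Fo F (dualo x)) ∘ par (Fo F (dualo x)))).
  - rewrite par_invol, comp_idr. reflexivity.
  - rewrite comp_assoc, Hkp, comp_idl. reflexivity.
Qed.

Lemma push {D1 D2 : FermCat} (F : SMDagFunctor D1 D2) (x : Ob D1) (t : Hom D2 (Fo F x) (Fo F x)) :
  t = runit (Fo F x) ∘ ((idm _ ⊗ (eps F)†) ∘ ((idm _ ⊗ Fm F (ev x)) ∘ ((idm _ ⊗ mu F (dualo x) x)
      ∘ ((idm _ ⊗ (idm _ ⊗ t)) ∘ (assoc _ _ _ ∘ (((mu F x (dualo x))† ⊗ idm _)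
      ∘ ((Fm F (coev x) ⊗ idm _) ∘ ((eps F ⊗ idm _) ∘ (lunit _)†)))))))).
Proof.
  transitivity (Fm F (idm x) ∘ t). { rewrite Fm_id, comp_idl. reflexivity. }
  rewrite <- (zigzag_l x).
  rewrite !Fm_comp, Fm_dag, F_runit', F_lunit', F_assoc', !F_tens, !Fm_id.
  rewrite !dag_comp, !dag_tens, !dag_invol, !dag_id. assocr.
  simp_mu F.
  crw (lunit_nat_d t). crw (interchange (eps F) t). crw (interchange (Fm F (coev x)) t).
  crw (interchange (mu F x (dualo x))† t).
  rewrite <- (tens_id (Fo F x) (Fo F (dualo x))).
  crwl (assoc_nat (idm (Fo F x)) (idm (Fo F (dualo x))) t). reflexivity.
Qed.

Lemma parF1 {D1 D2 : FermCat} (F : SMDagFunctor D1 D2) : par (Fo F unit) = idm _.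
Proof.
  transitivity (par (Fo F unit) ∘ (eps F ∘ (eps F)†)).
  { rewrite eps_dr, comp_idr. reflexivity. }
  crw (par_nat (eps F)). rewrite par_unit, comp_idl. apply eps_dr.
Qed.

Theorem mainTheorem1 (D1 D2 : FermCat)
  (H1 : fermionically_dagger_compact D1) (H2 : fermionically_dagger_compact D2)
  (F : SMDagFunctor D1 D2)
  (Hinv : forall (c : Ob D2) (j : Hom D2 c c),
      iso_positive j -> comp j j = idm c -> j = idm c) :
  forall x : Ob D1, Fm F (@par D1 x) = @par D2 (Fo F x).
Proof.
  intro x.
  pose proof (stepA D1 D2 H1 H2 F Hinv x) as SA.
  assert (E : Fm F (ev x) ∘ (mu F (dualo x) x ∘ (idm _ ⊗ Fm F (par x)))
            = Fm F (ev x) ∘ (mu F (dualo x) x ∘ (idm _ ⊗ par (Fo F x)))).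
  { transitivity (Fm F (ev x) ∘ (mu F (dualo x) x ∘ (par (Fo F (dualo x)) ⊗ idm _))).
    - transitivity (Fm F (ev x) ∘ (mu F (dualo x) x ∘ ((Fm F (par (dualo x)) ⊗ Fm F (par x)) ∘ (par (Fo F (dualo x)) ⊗ idm _)))).
      { rewrite tcomp, comp_idr, SA, par_invol. reflexivity. }
      crwl (mu_nat F (par (dualo x)) (par x)). rewrite <- par_tens.
      crwl (Fm_comp F (par (tens (dualo x) x)) (ev x)). rewrite <- par_nat, par_unit, comp_idl.
      reflexivity.
    - transitivity (Fm F (ev x) ∘ (mu F (dualo x) x ∘ ((par (Fo F (dualo x)) ⊗ par (Fo F x)) ∘ (par (Fo F (dualo x)) ⊗ idm _)))).
      2: { rewrite tcomp, comp_idr, par_invol. reflexivity. }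
      rewrite <- par_tens. crwl (par_nat (mu F (dualo x) x)).
      crwl (par_nat (Fm F (ev x))). rewrite parF1, comp_idl. reflexivity. }
  assert (E' : (idm (Fo F x) ⊗ Fm F (ev x)) ∘ ((idm _ ⊗ mu F (dualo x) x) ∘ (idm _ ⊗ (idm _ ⊗ Fm F (par x))))
             = (idm (Fo F x) ⊗ Fm F (ev x)) ∘ ((idm _ ⊗ mu F (dualo x) x) ∘ (idm _ ⊗ (idm _ ⊗ par (Fo F x))))).
  { rewrite <- !idl_t. rewrite E. reflexivity. }
  rewrite (push F x (Fm F (par x))), (push F x (par (Fo F x))).
  crw E'. reflexivity.
Qed.
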